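(* Let $I\subseteq\mathbb{R}_-$ be a nonempty interval containing $0$ and let $f\colon I^n\to\mathbb{R}$. The following are equivalent: (i) $f$ is comonotonically modular; (ii) $f$ is invariant under horizontal max-differences; (iii) there exists $g\colon I^n\to\mathbb{R}$ such that for every $\sigma\in S_n$ and every $\mathbf{x}\in I^n_\sigma$, $$f(\mathbf{x})=g(\mathbf{0})+\sum_{i\in[n]}\Big(g\big(x_{\sigma(i)}\mathbf{1}_{A^\downarrow_\sigma(i)}\big)-g\big(x_{\sigma(i)}\mathbf{1}_{A^\downarrow_\sigma(i-1)}\big)\Big).$$ Moreover, in this case one can take $g=f$ in (iii).
   Context: Notation: $[n]=\{1,\ldots,n\}$; $S_n$ is the set of permutations of $[n]$; $\mathbf{1}_A$ is the indicator tuple of $A\subseteq[n]$, $\mathbf{0}=\mathbf{1}_\varnothing$. For $\sigma\in S_n$, $\mathbb{R}^n_\sigma=\{\mathbf{x}: x_{\sigma(1)}\leq\cdots\leq x_{\sigma(n)}\}$, $I^n_\sigma=I^n\cap\mathbb{R}^n_\sigma$, $A^\downarrow_\sigma(i)=\{\sigma(1),\ldots,\sigma(i)\}$, $A^\downarrow_\sigma(0)=\varnothing$. $\wedge,\vee$ denote componentwise min and max; $\mathbf{x}\vee c$ is the tuple with components $\max(x_i,c)$. Two tuples $\mathbf{x},\mathbf{x}'\in I^n$ are comonotonic if $\mathbf{x},\mathbf{x}'\in I^n_\sigma$ for some $\sigma\in S_n$. A function $f\colon I^n\to\mathbb{R}$ is comonotonically modular if $f(\mathbf{x})+f(\mathbf{x}')=f(\mathbf{x}\wedge\mathbf{x}')+f(\mathbf{x}\vee\mathbf{x}')$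 for all comonotonic $\mathbf{x},\mathbf{x}'\in I^n$. For $c\leq 0$, $[\mathbf{x}]^c$ is the tuple whose $i$th component is $0$ if $x_i\geq c$ and $x_i$ otherwise. For $I\subseteq\mathbb{R}_-$, $f$ is invariant under horizontal max-differences if $f(\mathbf{x})-f(\mathbf{x}\vee c)=f([\mathbf{x}]^c)-f([\mathbf{x}]^c\vee c)$ for all $\mathbf{x}\in I^n$, $c\in I$. *)

(* Defs.v *)
From HB Require Import structures.
From mathcomp Require Import all_boot all_order all_algebra all_fingroup.
Set Implicit Arguments. Unset Strict Implicit. Unset Printing Implicit Defensive.
Import Order.TTheory GRing.Theory Num.Theory.
Local Open Scope ring_scope.

Section Defs.
Variables (R : realFieldType) (n : nat).

Definition tup := {ffun 'I_n -> R}.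

Definition neg_interval_with_0 (I : R -> Prop) : Prop :=
  [/\ (forall a b c, I a -> I c -> a <= b -> b <= c -> I b),
      I 0 & (forall x, I x -> x <= 0)].

Definition inIn (I : R -> Prop) (x : tup) : Prop := forall i, I (x i).

Definition in_sigma (s : 'S_n) (x : tup) : Prop :=
  forall i j : 'I_n, (i <= j)%N -> x (s i) <= x (s j).

Definition comonotonic (I : R -> Prop) (x y : tup) : Prop :=
  exists s : 'S_n, [/\ inIn I x, inIn I y, in_sigma s x & in_sigma s y].

Definition tmin (x y : tup) : tup := [ffun i => Num.min (x i) (y i)].
Definition tmax (x y : tup) : tup := [ffun i => Num.max (x i) (y i)].
Definition tmaxc (x : tup) (c : R) : tup := [ffun i => Num.max (x i) c].
Definition cutc (x : tup) (c : R) : tup := [ffun i => if c <= x i then 0 else x i].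

Definition comonotonically_modular (I : R -> Prop) (f : tup -> R) : Prop :=
  forall x y, comonotonic I x y -> f x + f y = f (tmin x y) + f (tmax x y).

Definition horizontal_maxdiff_invariant (I : R -> Prop) (f : tup -> R) : Prop :=
  forall x c, inIn I x -> I c ->
    f x - f (tmaxc x c) = f (cutc x c) - f (tmaxc (cutc x c) c).

(* A^down_sigma(k) = {sigma(1),...,sigma(k)}  (0-based: sigma j for j < k) *)
Definition Adown (s : 'S_n) (k : nat) : {set 'I_n} := [set s j | j : 'I_n & (j < k)%N].

Definition sind (a : R) (A : {set 'I_n}) : tup := [ffun i => if i \in A then a else 0].

Definition tzero : tup := [ffun=> 0].

(* The representation (iii): index i : 'I_n corresponds to i+1 in [n] *)
Definition lovasz_repr (g : tup -> R) (s : 'S_n) (x : tup) : R :=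
  g tzero + \sum_(i < n) (g (sind (x (s i)) (Adown s i.+1)) - g (sind (x (s i)) (Adown s i))).

Definition represented_by (I : R -> Prop) (f g : tup -> R) : Prop :=
  forall (s : 'S_n) (x : tup), inIn I x -> in_sigma s x -> f x = lovasz_repr g s x.

End Defs.

(* Main.v *)
Require Import Defs.
From HB Require Import structures.
From mathcomp Require Import all_boot all_order all_algebra all_fingroup.
Import Order.TTheory GRing.Theory Num.Theory.
Local Open Scope ring_scope.
Set Implicit Arguments. Unset Strict Implicit.
Lemma exists_sort (R : realFieldType) (n : nat) (x : tup R n) :
  exists s : 'S_n, in_sigma s x.
Proof.
pose r := fun i j : 'I_n => x i <= x j.
pose l := sort r (enum 'I_n).
have hsz : size l = n by rewrite size_sort size_enum_ord.
have hs : size l == n by rewrite hsz.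
pose t := Tuple hs.
have inj : injective (tnth t).
  move=> i j; rewrite !(tnth_nth i) /= => /eqP.
  rewrite nth_uniq ?hsz ?ltn_ord ?sort_uniq ?enum_uniq //.
  by move=> /eqP /val_inj.
exists (perm inj) => i j hij; rewrite !permE !(tnth_nth i) /=.
have tr : transitive r by move=> a b c; apply: le_trans.
have rf : reflexive r by move=> a; apply: lexx.
have tot : total r by move=> a b; apply: le_total.
apply: (sorted_leq_nth tr rf i (sort_sorted tot _)) => //;
  by rewrite inE hsz ltn_ord.
Qed.

Lemma mem_Adown (n : nat) (s : 'S_n) k i : (s i \in Adown s k) = (i < k)%N.
Proof. by rewrite /Adown mem_imset ?inE //; exact: perm_inj. Qed.

Definition H (R : realFieldType) (n : nat) (g : tup R n -> R) (s : 'S_n) (i : nat) (t : R) :=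
  g (sind t (Adown s i.+1)) - g (sind t (Adown s i)).

Arguments H {R n}.

Lemma lovaszE (R : realFieldType) (n : nat) (g : tup R n -> R) s x :
  lovasz_repr g s x = g (tzero R n) + \sum_(i < n) H g s i (x (s i)).
Proof. by []. Qed.

Lemma minmax_sum (R : realFieldType) (h : R -> R) a b :
  h a + h b = h (Num.min a b) + h (Num.max a b).
Proof. by case: (leP a b) => _ //; rewrite addrC. Qed.

Lemma le_min2 (R : realFieldType) (a b c d : R) : a <= c -> b <= d -> Num.min a b <= Num.min c d.
Proof. by move=> h1 h2; rewrite le_min !ge_min h1 h2 orbT. Qed.
Lemma le_max2 (R : realFieldType) (a b c d : R) : a <= c -> b <= d -> Num.max a b <= Num.max c d.
Proof. by move=> h1 h2; rewrite ge_max !le_max h1 h2 orbT. Qed.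

Lemma repr_cm (R : realFieldType) (n : nat) (I : R -> Prop) (f g : tup R n -> R) :
  represented_by I f g -> comonotonically_modular I f.
Proof.
move=> hr x y [s [hx hy sx sy]].
have hmin : inIn I (tmin x y) by move=> i; rewrite ffunE; case: leP.
have hmax : inIn I (tmax x y) by move=> i; rewrite ffunE; case: leP.
have smin : in_sigma s (tmin x y).
  by move=> i j hij; rewrite !ffunE; apply: le_min2; [apply: sx|apply: sy].
have smax : in_sigma s (tmax x y).
  by move=> i j hij; rewrite !ffunE; apply: le_max2; [apply: sx|apply: sy].
rewrite (hr s x hx sx) (hr s y hy sy) (hr s _ hmin smin) (hr s _ hmax smax) !lovaszE.
rewrite addrACA -big_split [in RHS]addrACA -big_split /=; congr (_ + _).
by apply: eq_bigr => i _; rewrite !ffunE minmax_sum.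
Qed.

Lemma inIn_tmaxc (R : realFieldType) (n : nat) (I : R -> Prop) (y : tup R n) c :
  inIn I y -> I c -> inIn I (tmaxc y c).
Proof. by move=> hy hc i; rewrite ffunE; case: leP. Qed.

Lemma inIn_cutc (R : realFieldType) (n : nat) (I : R -> Prop) (y : tup R n) c :
  I 0 -> inIn I y -> inIn I (cutc y c).
Proof. by move=> h0 hy i; rewrite ffunE; case: ifP. Qed.

Lemma sigma_tmaxc (R : realFieldType) (n : nat) (s : 'S_n) (y : tup R n) c :
  in_sigma s y -> in_sigma s (tmaxc y c).
Proof. by move=> hy i j hij; rewrite !ffunE le_max2 ?hy. Qed.

Lemma sigma_cutc (R : realFieldType) (n : nat) (s : 'S_n) (y : tup R n) c :
  (forall i, y i <= 0) -> in_sigma s y -> in_sigma s (cutc y c).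
Proof.
move=> hneg hy i j hij; rewrite !ffunE.
have hyij := hy i j hij.
case: ifP => hi; case: ifP => hj //.
by rewrite (le_trans hi hyij) in hj.
Qed.

Lemma addKB (V : zmodType) (a b c : V) : a + b - (a + c) = b - c.
Proof. by rewrite opprD addrACA subrr add0r. Qed.

Lemma repr_hm (R : realFieldType) (n : nat) (I : R -> Prop) (f g : tup R n -> R) :
  neg_interval_with_0 I -> represented_by I f g -> horizontal_maxdiff_invariant I f.
Proof.
move=> [_ I0 Ineg] hr x c hx hc.
have [s sx] := exists_sort x.
have xneg : forall i, x i <= 0 by move=> i; apply: Ineg.
have h1 := inIn_tmaxc hx hc.
have h2 := inIn_cutc c I0 hx.
have h3 := inIn_tmaxc h2 hc.
have s1 := sigma_tmaxc c sx.
have s2 := sigma_cutc c xneg sx.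
have s3 := sigma_tmaxc c s2.
rewrite (hr s x hx sx) (hr s _ h1 s1) (hr s _ h2 s2) (hr s _ h3 s3) !lovaszE.
rewrite !addKB -!sumrB; apply: eq_bigr => i _.
rewrite !ffunE; case: (leP c (x (s i))) => h.
  by rewrite (max_l (Ineg c hc)) !subrr.
by rewrite max_r // ltW.
Qed.

Definition u (R : realFieldType) (n : nat) (s : 'S_n) (x : tup R n) (k : nat) : tup R n :=
  [ffun j => if j \in Adown s k then x j else 0].

Lemma u0 (R : realFieldType) (n : nat) (s : 'S_n) (x : tup R n) : u s x 0 = tzero R n.
Proof.
apply/ffunP => j; rewrite !ffunE -(permKV s j).
by rewrite mem_Adown.
Qed.

Lemma un (R : realFieldType) (n : nat) (s : 'S_n) (x : tup R n) : u s x n = x.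
Proof.
apply/ffunP => j; rewrite !ffunE -(permKV s j).
by rewrite mem_Adown ltn_ord.
Qed.

Lemma repr_of_step (R : realFieldType) (n : nat) (I : R -> Prop) (f : tup R n -> R) :
  (forall s x (k : 'I_n), inIn I x -> in_sigma s x ->
     f (u s x k.+1) - f (u s x k) = H f s k (x (s k))) -> represented_by I f f.
Proof.
move=> st s x hx sx; rewrite lovaszE.
have -> : \sum_(i < n) H f s i (x (s i)) = \sum_(i < n) (f (u s x i.+1) - f (u s x i)).
  by apply: eq_bigr => i _; rewrite st.
rewrite -(big_mkord xpredT (fun i => f (u s x i.+1) - f (u s x i))).
by rewrite telescope_sumr // un u0 addrC subrK.
Qed.

Ltac pointwise s j :=
  rewrite !ffunE -(permKV s j); move: ((s^-1)%g j) => i;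
  rewrite !mem_Adown ?ltnS.

Lemma F1 (R : realFieldType) (n : nat) (s : 'S_n) (x : tup R n) (k : 'I_n) :
  in_sigma s x -> x (s k) <= 0 ->
  tmaxc (u s x k) (x (s k)) = sind (x (s k)) (Adown s k).
Proof.
move=> sx hc; apply/ffunP => j; pointwise s j.
case: (ltngtP i k) => [hik|hik|eik].
- by rewrite max_r // sx // ltnW.
- by rewrite max_l.
- by rewrite max_l.
Qed.

Lemma F2 (R : realFieldType) (n : nat) (s : 'S_n) (x : tup R n) (k : 'I_n) :
  in_sigma s x -> x (s k) <= 0 ->
  tmaxc (u s x k.+1) (x (s k)) = sind (x (s k)) (Adown s k.+1).
Proof.
move=> sx hc; apply/ffunP => j; pointwise s j.
case: (ltngtP i k) => [hik|hik|eik].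
- by rewrite max_r // sx // ltnW.
- by rewrite max_l.
- by rewrite (val_inj eik) maxxx.
Qed.

Lemma F3 (R : realFieldType) (n : nat) (s : 'S_n) (x : tup R n) (k : 'I_n) :
  x (s k) <= 0 ->
  cutc (u s x k.+1) (x (s k)) = cutc (u s x k) (x (s k)).
Proof.
move=> hc; apply/ffunP => j; pointwise s j.
case: (ltngtP i k) => [hik|hik|eik] //.
by rewrite (val_inj eik) lexx hc.
Qed.

Lemma F4 (R : realFieldType) (n : nat) (s : 'S_n) (x : tup R n) (k : 'I_n) :
  in_sigma s x -> x (s k) <= 0 ->
  tmin (u s x k) (sind (x (s k)) (Adown s k.+1)) = u s x k.+1.
Proof.
move=> sx hc; apply/ffunP => j; pointwise s j.
case: (ltngtP i k) => [hik|hik|eik].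
- by rewrite min_l // sx // ltnW.
- by rewrite min_l.
- by rewrite (val_inj eik) min_r.
Qed.

Lemma F5 (R : realFieldType) (n : nat) (s : 'S_n) (x : tup R n) (k : 'I_n) :
  in_sigma s x -> x (s k) <= 0 ->
  tmax (u s x k) (sind (x (s k)) (Adown s k.+1)) = sind (x (s k)) (Adown s k).
Proof.
move=> sx hc; apply/ffunP => j; pointwise s j.
case: (ltngtP i k) => [hik|hik|eik].
- by rewrite max_r // sx // ltnW.
- by rewrite max_l.
- by rewrite max_l.
Qed.

Lemma inIn_u (R : realFieldType) (n : nat) (I : R -> Prop) (s : 'S_n) (x : tup R n) k :
  I 0 -> inIn I x -> inIn I (u s x k).
Proof. by move=> h0 hx j; rewrite ffunE; case: ifP. Qed.

Lemma inIn_sind (R : realFieldType) (n : nat) (I : R -> Prop) c (A : {set 'I_n}) :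
  I 0 -> I c -> inIn I (sind c A).
Proof. by move=> h0 hc j; rewrite ffunE; case: ifP. Qed.

Lemma sigma_u (R : realFieldType) (n : nat) (s : 'S_n) (x : tup R n) k :
  (forall i, x i <= 0) -> in_sigma s x -> in_sigma s (u s x k).
Proof.
move=> xneg sx i j hij; rewrite !ffunE !mem_Adown.
case: (ltnP i k) => hi; case: (ltnP j k) => hj //.
- exact: sx.
- by move: (leq_trans hi hij); rewrite leqNgt hj.
Qed.

Lemma sigma_sind (R : realFieldType) (n : nat) (s : 'S_n) (c : R) k :
  c <= 0 -> in_sigma s (sind c (Adown s k)).
Proof.
move=> hc i j hij; rewrite !ffunE !mem_Adown.
case: (ltnP i k) => hi; case: (ltnP j k) => hj //.
by move: (leq_trans hi hij); rewrite leqNgt hj.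
Qed.

Lemma hm_step (R : realFieldType) (n : nat) (I : R -> Prop) (f : tup R n -> R) :
  neg_interval_with_0 I -> horizontal_maxdiff_invariant I f ->
  forall s x (k : 'I_n), inIn I x -> in_sigma s x ->
     f (u s x k.+1) - f (u s x k) = H f s k (x (s k)).
Proof.
move=> [_ I0 Ineg] hm s x k hx sx.
have hc : I (x (s k)) := hx (s k).
have c0 := Ineg _ hc.
have xneg : forall i, x i <= 0 by move=> i; apply: Ineg.
have E1 := hm (u s x k.+1) (x (s k)) (inIn_u s k.+1 I0 hx) hc.
rewrite F2 // F3 // in E1.
have E2 := hm (u s x k) (x (s k)) (inIn_u s k I0 hx) hc.
rewrite F1 // in E2.
rewrite /H -[f (u s x k.+1)](subrK (f (sind (x (s k)) (Adown s k.+1)))) E1.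
by rewrite -[f (u s x k)](subrK (f (sind (x (s k)) (Adown s k)))) E2 addKB.
Qed.

Lemma cm_step (R : realFieldType) (n : nat) (I : R -> Prop) (f : tup R n -> R) :
  neg_interval_with_0 I -> comonotonically_modular I f ->
  forall s x (k : 'I_n), inIn I x -> in_sigma s x ->
     f (u s x k.+1) - f (u s x k) = H f s k (x (s k)).
Proof.
move=> [_ I0 Ineg] cm s x k hx sx.
have hc : I (x (s k)) := hx (s k).
have c0 := Ineg _ hc.
have xneg : forall i, x i <= 0 by move=> i; apply: Ineg.
have E := cm (u s x k) (sind (x (s k)) (Adown s k.+1))
  (ex_intro _ s (And4 (inIn_u s k I0 hx) (inIn_sind _ I0 hc)
     (sigma_u k xneg sx) (sigma_sind s k.+1 c0))).
rewrite F4 // F5 // in E.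
rewrite /H (_ : f (sind (x (s k)) (Adown s k.+1)) =
   f (u s x k.+1) + f (sind (x (s k)) (Adown s k)) - f (u s x k)).
  by rewrite addrAC addrK.
by rewrite -E addrC addKr.
Qed.

Unset Implicit Arguments.

Theorem theorem10 (R : realFieldType) (n : nat) (I : R -> Prop)
    (f : tup R n -> R) (hI : neg_interval_with_0 I) :
  [/\ comonotonically_modular I f <-> horizontal_maxdiff_invariant I f,
      horizontal_maxdiff_invariant I f <-> (exists g : tup R n -> R, represented_by I f g)
    & comonotonically_modular I f -> represented_by I f f].
Proof.
have cmr : comonotonically_modular I f -> represented_by I f f.
  by move=> cm; apply: repr_of_step; apply: cm_step.
have hmr : horizontal_maxdiff_invariant I f -> represented_by I f f.
  by move=> hm; apply: repr_of_step; apply: hm_step.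
split => //.
- split => h.
    exact: (repr_hm hI (cmr h)).
  exact: (repr_cm (hmr h)).
- split => [h|[g hg]]; first by exists f; apply: hmr.
  exact: (repr_hm hI hg).
Qed.
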